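(* Let $\mathcal{M}=(S,P,E,s_{init},L)$ be a CTMC, $\varepsilon,\delta\geq0$, and $q\geq\max_{s\in S}E(s)$. If $s\sim^{\mathcal{M}}_{\varepsilon,\delta}s'$, then $s\sim_{\tau}s'$ in the uniformization $\mathcal{M}_q$ of $\mathcal{M}$ with respect to $q$, where $\tau=e^{\delta}(1+\varepsilon)-1$.
   Context: A CTMC $(S,P,E,s_{init},L)$: finite $S$, $P\colon S\to\mathrm{Distr}(S)$ ($P(s,A)=\sum_{a\in A}P(s,a)$), $E\colon S\to\mathbb{R}_{>0}$, initial state, labeling $L$. For $R\subseteq S\times S$, $R(A)=\{t\mid\exists a\in A:(a,t)\in R\}$. A reflexive symmetric $R$ is an $(\varepsilon,\delta)$-bisimulation on $\mathcal{M}$ if for all $(s,s')\in R$: $L(s)=L(s')$, $|\ln E(s)-\ln E(s')|\leq\delta$, and $P(s,A)\leq P(s',R(A))+\varepsilon$ for all $A\subseteq S$; $s\sim^{\mathcal{M}}_{\varepsilon,\delta}s'$ if some such relation contains $(s,s')$. The uniformization $\mathcal{M}_q$ is the DTMC $(S,\overline{P},s_{init},L)$ with $\overline{P}(s,s')=P(s,s')E(s)/q$ for $s\neq s'$ and $\overline{P}(s,s)=1+P(s,s)E(s)/q-E(s)/q$. For a DTMC $(S,\overline{P},s_{init},L)$ and $\tau\geq0$, a reflexive symmetric $R\subseteq S\times S$ is a $\tau$-bisimulation if for all $(s,t)\in R$: $L(s)=L(t)$ and $\overline{P}(s,A)\leq\overline{P}(t,R(A))+\tau$ for all $A\subseteq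 S$; $s\sim_\tau t$ if some $\tau$-bisimulation contains $(s,t)$. *)

(* Defs.v *)
From mathcomp Require Import all_boot all_order all_algebra.
From mathcomp Require Import all_classical all_reals all_analysis.
Set Implicit Arguments. Unset Strict Implicit. Unset Printing Implicit Defensive.
Import Order.TTheory GRing.Theory Num.Theory.
Local Open Scope ring_scope.

Definition is_distr (R : realType) (S : finType) (mu : S -> R) : Prop :=
  (forall s, 0 <= mu s) /\ \sum_(s : S) mu s = 1.

Record CTMC (R : realType) (S : finType) (Lab : eqType) := {
  ctP : S -> S -> R;
  ctP_distr : forall s, is_distr (ctP s);
  ctE : S -> R;
  ctE_pos : forall s, 0 < ctE s;
  ct_init : S;
  ctL : S -> Lab }.

Record DTMC (R : realType) (S : finType) (Lab : eqType) := {
  dtP : S -> S -> R;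
  dt_init : S;
  dtL : S -> Lab }.

Definition probset (R : realType) (S : finType) (P : S -> S -> R)
  (s : S) (A : {set S}) : R := \sum_(a in A) P s a.

Definition rel_image (S : finType) (Rl : rel S) (A : {set S}) : {set S} :=
  [set t | [exists a in A, Rl a t]].

Definition reflexive_symmetric (S : finType) (Rl : rel S) : Prop :=
  (forall s, Rl s s) /\ (forall s t, Rl s t -> Rl t s).

Definition ed_bisimulation (R : realType) (S : finType) (Lab : eqType)
  (M : CTMC R S Lab) (eps delta : R) (Rl : rel S) : Prop :=
  reflexive_symmetric Rl /\
  forall s s', Rl s s' ->
    [/\ ctL M s = ctL M s',
        `| ln (ctE M s) - ln (ctE M s') | <= delta &
        forall A : {set S},
          probset (ctP M) s A <= probset (ctP M) s' (rel_image Rl A) + eps].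

Definition ed_bisimilar (R : realType) (S : finType) (Lab : eqType)
  (M : CTMC R S Lab) (eps delta : R) (s s' : S) : Prop :=
  exists Rl : rel S, ed_bisimulation M eps delta Rl /\ Rl s s'.

Definition unifP (R : realType) (S : finType) (Lab : eqType)
  (M : CTMC R S Lab) (q : R) (s s' : S) : R :=
  if s == s' then 1 + ctP M s s * ctE M s / q - ctE M s / q
  else ctP M s s' * ctE M s / q.

Definition uniformization (R : realType) (S : finType) (Lab : eqType)
  (M : CTMC R S Lab) (q : R) : DTMC R S Lab :=
  {| dtP := unifP M q; dt_init := ct_init M; dtL := ctL M |}.

Definition tau_bisimulation (R : realType) (S : finType) (Lab : eqType)
  (D : DTMC R S Lab) (tau : R) (Rl : rel S) : Prop :=
  reflexive_symmetric Rl /\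
  forall s t, Rl s t ->
    dtL D s = dtL D t /\
    forall A : {set S},
      probset (dtP D) s A <= probset (dtP D) t (rel_image Rl A) + tau.

Definition tau_bisimilar (R : realType) (S : finType) (Lab : eqType)
  (D : DTMC R S Lab) (tau : R) (s t : S) : Prop :=
  exists Rl : rel S, tau_bisimulation D tau Rl /\ Rl s t.

(* Main.v *)
Set Warnings "-all".
Require Import Defs.
From mathcomp Require Import all_boot all_order all_algebra.
From mathcomp Require Import all_classical all_reals all_analysis.
From mathcomp Require Import ring lra.
Import Order.TTheory GRing.Theory Num.Theory.
Local Open Scope ring_scope.

Section Aux.
Variables (R : realType) (S : finType).

Lemma probset_mk (P : S -> S -> R) s A :
  probset P s A = \sum_x (if x \in A then P s x else 0).
Proof. by rewrite /probset big_mkcond. Qed.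

Lemma probset_sub (P : S -> S -> R) s (A B : {set S}) :
  (forall x, 0 <= P s x) -> A \subset B -> probset P s A <= probset P s B.
Proof.
move=> h0 hAB; rewrite !probset_mk; apply: ler_sum => x _.
case: ifP => xA; first by rewrite (fintype.subsetP hAB x xA).
by case: ifP.
Qed.

Lemma probset_compl (P : S -> S -> R) s (A : {set S}) :
  probset P s A + probset P s (~: A) = \sum_x P s x.
Proof.
rewrite !probset_mk -big_split /=; apply: eq_bigr => x _.
by rewrite finset.in_setC; case: (x \in A) => /=; rewrite ?addr0 ?add0r.
Qed.

Lemma probset_ge0 (P : S -> S -> R) s A :
  (forall x, 0 <= P s x) -> 0 <= probset P s A.
Proof. by move=> h; rewrite /probset; apply: sumr_ge0. Qed.

End Aux.

Lemma unif_sum (R : realType) (S : finType) (Lab : eqType)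
  (M : CTMC R S Lab) q s A :
  probset (unifP M q) s A =
  ctE M s / q * probset (ctP M) s A + (if s \in A then 1 - ctE M s / q else 0).
Proof.
rewrite !probset_mk mulr_sumr.
case: ifP => sA.
- rewrite (bigD1 s) //= [X in _ = X + _](bigD1 s) //= sA /unifP eqxx.
  set a := ctE M s / q.
  have -> : \sum_(i | i != s) (if i \in A then if s == i
        then 1 + ctP M s s * ctE M s / q - ctE M s / q
        else ctP M s i * ctE M s / q else 0) =
      \sum_(i | i != s) a * (if i \in A then ctP M s i else 0).
    apply: eq_bigr => x /negPf xs; rewrite eq_sym xs.
    by case: (x \in A); rewrite ?mulr0 // /a; ring.
  rewrite -/a -mulrA -/a; ring.
- rewrite addr0; apply: eq_bigr => x _; rewrite /unifP.
  case: eqP => [<-|_]; first by rewrite sA mulr0.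
  by case: (x \in A); rewrite ?mulr0 //; ring.
Qed.

Theorem lemma2 (R : realType) (S : finType) (Lab : eqType)
  (M : CTMC R S Lab) (eps delta q : R) (s s' : S) :
  0 <= eps -> 0 <= delta ->
  (forall x : S, ctE M x <= q) ->
  ed_bisimilar M eps delta s s' ->
  tau_bisimilar (uniformization M q) (expR delta * (1 + eps) - 1) s s'.
Proof.
move=> he hd hq [Rl [[[Rrefl Rsym] HB] Hss']].
exists Rl; split => //; split => // x y Rxy.
have [HL Hln HP] := HB x y Rxy.
split => // A; rewrite /=.
set e := expR delta.
have e1 : 1 <= e by apply: le_trans (expR_ge1Dx _); lra.
have Ex := ctE_pos M x; have Ey := ctE_pos M y.
have q0 : 0 < q by apply: lt_le_trans Ex (hq x).
have Eexp : forall u v, Rl u v -> ctE M u <= e * ctE M v.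
  move=> u v Ruv; have [_ H _] := HB u v Ruv.
  have lu : expR (ln (ctE M u)) = ctE M u by apply: lnK; rewrite posrE ctE_pos.
  have lv : expR (ln (ctE M v)) = ctE M v by apply: lnK; rewrite posrE ctE_pos.
  rewrite -lu -lv /e -expRD.
  rewrite ler_expR; move: H; rewrite ler_norml; lra.
have Exy := Eexp x y Rxy; have Eyx := Eexp y x (Rsym _ _ Rxy).
set a := ctE M x / q; set b := ctE M y / q.
have a0 : 0 < a by rewrite divr_gt0.
have b0 : 0 < b by rewrite divr_gt0.
have a1 : a <= 1 by rewrite ler_pdivrMr // mul1r.
have b1 : b <= 1 by rewrite ler_pdivrMr // mul1r.
have ab : a <= e * b by rewrite /a /b mulrA ler_pM2r ?invr_gt0.
have ba : b <= e * a by rewrite /a /b mulrA ler_pM2r ?invr_gt0.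
have nx := (ctP_distr M x).1; have ny := (ctP_distr M y).1.
have sx := (ctP_distr M x).2; have sy := (ctP_distr M y).2.
rewrite !unif_sum -/a -/b.
have xR : x \in A -> y \in rel_image Rl A.
  by move=> xA; rewrite inE; apply/existsP; exists x; rewrite xA.
case: ifP => xA.
- rewrite (xR xA).
  set X := probset (ctP M) x (~: A); set Y := probset (ctP M) y (~: rel_image Rl A).
  have hX : probset (ctP M) x A = 1 - X by have := @probset_compl _ _ (ctP M) x A; rewrite -/X sx; lra.
  have hY : probset (ctP M) y (rel_image Rl A) = 1 - Y
    by have := @probset_compl _ _ (ctP M) y (rel_image Rl A); rewrite -/Y sy; lra.
  rewrite hX hY.
  have X0 : 0 <= X by apply: probset_ge0.
  have Y0 : 0 <= Y by apply: probset_ge0.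
  have X1 : X <= 1 by rewrite -sx -(@probset_compl _ _ (ctP M) x A) lerDr probset_ge0.
  have YX : Y <= X + eps.
    have [_ _ HP'] := HB y x (Rsym _ _ Rxy).
    apply: le_trans (HP' (~: rel_image Rl A)) _.
    rewrite lerD2r; apply: probset_sub => //; apply/fintype.subsetP => z.
    rewrite inE => /existsP [w /andP [wB Rwz]].
    rewrite inE; apply/negP => zA; move: wB; rewrite inE inE.
    by move/negP; apply; apply/existsP; exists z; rewrite zA Rsym.
  have h1 : b * Y <= b * X + b * eps by rewrite -mulrDr ler_wpM2l // ltW.
  have h2 : b * X <= e * a * X by rewrite ler_wpM2r.
  have h3 : (e - 1) * (a * X) <= e - 1.
    by rewrite ler_piMr ?subr_ge0 // mulr_ile1 // ltW.
  have h4 : b * eps <= eps by rewrite ler_piMl.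
  have h5 : eps <= e * eps by rewrite ler_peMl.
  have : b * Y <= a * X + (e - 1) + e * eps.
    lra.
  move=> H; rewrite !mulrBr !mulr1 mulrDr mulr1; lra.
- set X := probset (ctP M) x A; set Y := probset (ctP M) y (rel_image Rl A).
  have X0 : 0 <= X by apply: probset_ge0.
  have Y0 : 0 <= Y by apply: probset_ge0.
  have Y1 : Y <= 1 by rewrite -sy -(@probset_compl _ _ (ctP M) y (rel_image Rl A)) lerDl probset_ge0.
  have XY : X <= Y + eps := HP A.
  have h1 : a * X <= a * Y + a * eps by rewrite -mulrDr ler_wpM2l // ltW.
  have h2 : a * Y <= e * b * Y by rewrite ler_wpM2r.
  have h3 : (e - 1) * (b * Y) <= e - 1.
    by rewrite ler_piMr ?subr_ge0 // mulr_ile1 // ltW.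
  have h4 : a * eps <= eps by rewrite ler_piMl.
  have h5 : eps <= e * eps by rewrite ler_peMl.
  have h6 : 0 <= (if y \in rel_image Rl A then 1 - b else 0) by case: ifP; lra.
  have : a * X <= b * Y + (e - 1) + e * eps.
    lra.
  move=> H; rewrite addr0 -addrA; apply: le_trans H _; rewrite -addrA lerD2l; lra.
Qed.
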